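(* Let $M$ be a matroid with set of bases $\mathcal{B}(M)$, and let $<$ be a total order of $\mathcal{B}(M)$. If the induced order $<_\bullet$ of the facets of the dual matroid polytope $P_M^*$ is a shelling order of $P_M^*$, then $<$ is a shelling order of the independence complex $\mathcal{I}(M)$.
   Context: A matroid $M$ on a finite ground set $E$ has independence complex $\mathcal{I}(M)$ (the simplicial complex of independent sets), whose facets are the bases $\mathcal{B}(M)$. For $S\subseteq E$, $\chi_S\in\mathbb{R}^E$ denotes the characteristic vector of $S$. The matroid polytope is $P_M=\mathrm{conv}\{\chi_B : B\in\mathcal{B}(M)\}\subset\mathbb{R}^E$; its vertices are exactly the $\chi_B$. The dual polytope $P_M^*$ is a polytope whose face lattice is the opposite of that of $P_M$; so its facets $F_B$ are in natural bijection with bases $B$ (the facet $F_B$ corresponding to the vertex $\chi_B$). For an order $<$ on $\mathcal{B}(M)$, $<_\bullet$ is the order on facets of $P_M^*$ given by $F_B<_\bullet F_{B'}$ iff $B<B'$. A shelling order of a pure simplicial complex is a total order $F_1<\dots<F_k$ of its facets such that for each $j\ge 2$, the complex $\langle F_1,\dots,F_{j-1}\rangle\cap\langle F_j\rangle$ is pure of dimension one less than the complex (here $\langle\mathcal{G}\rangle$ is the complex generated by $\mathcal{G}$). A shelling of a polygon is an ordering of its edges such that every edge after the first shares a vertex with an earlier edge; a shelling of a polytope of dimension $\ge 3$ is an order $F_1,\dots,F_k$ of its facets such that for each $j\ge2$, $F_j\cap\bigcup_{i<j}F_i$ is a union of facets of $F_j$ forming an initial segment of some shelling order of $F_j$. 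*)

(* Defs.v *)
From Stdlib Require Import Rdefinitions.
From HB Require Import structures.
From mathcomp Require Import all_boot all_order all_algebra.
From mathcomp Require Import Rstruct.
Set Implicit Arguments.
Unset Strict Implicit.
Unset Printing Implicit Defensive.
Import Order.TTheory GRing.Theory Num.Theory.

Section Matroids.
Local Open Scope ring_scope.
Variable E : finType.


Definition is_matroid (indep : pred {set E}) : Prop :=
  [/\ indep set0,
      (forall A B : {set E}, indep B -> A \subset B -> indep A) &
      (forall A B : {set E}, indep A -> indep B -> (#|A| < #|B|)%N ->
         exists2 e, e \in B :\: A & indep (e |: A))].

(** Bases: the inclusion-maximal independent sets (= facets of I(M)). *)
Definition is_basis (indep : pred {set E}) (B : {set E}) : bool :=
  indep B && [forall B' : {set E}, (indep B' && (B \subset B')) ==> (B' == B)].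

(** Dimension + 1 of the complex generated by the facets in s. *)
Definition sc_size (s : seq {set E}) : nat := \max_(F <- s) #|F|.

(** s = F_1 < ... < F_k is a shelling order of the complex <F_1,...,F_k>:
    for each j >= 2, <F_1..F_{j-1}> \cap <F_j> is pure of dimension one less
    than the complex, i.e. all its facets have cardinality sc_size s - 1. *)
Definition sc_shelling (s : seq {set E}) : Prop :=
  forall j : nat, (0 < j < size s)%N ->
    let K := fun F : {set E} =>
      F \subset nth set0 s j /\
      exists2 i : nat, (i < j)%N & F \subset nth set0 s i in
    (forall F, K F -> #|F| = (sc_size s).-1 \/
                      exists2 F', K F' & (F \subset F') /\ #|F'| = (sc_size s).-1)
    /\ (forall F, K F -> (#|F| <= (sc_size s).-1)%N).

Definition chi (S : {set E}) : 'rV[R]_#|E| :=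
  \row_(j < #|E|) (if enum_val j \in S then 1 else 0).

(** A set G of bases is (the vertex set of) a nonempty face of
    P_M = conv {chi_B : B basis}: G is the set of bases maximizing some
    linear functional c on R^E. *)
Definition is_face (indep : pred {set E}) (G : {set {set E}}) : Prop :=
  exists c : 'rV[R]_#|E|,
    G = [set B | is_basis indep B &&
          [forall B', is_basis indep B' ==>
              (((c *m (chi B')^T) 0 0) <= ((c *m (chi B)^T) 0 0))]].

(** affine dimension of conv {chi_B : B in G}; the empty set has dim -1 *)
Definition aff_dim (G : {set {set E}}) : int :=
  if G == set0 then (-1) else
  let B0 := odflt set0 [pick B in G] in
  (\rank (\matrix_(i < #|G|) (chi (enum_val i) - chi B0)))%:Z.

Definition all_bases (indep : pred {set E}) : {set {set E}} :=
  [set B | is_basis indep B].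

(** ---------- The dual polytope P_M^dual (combinatorially) ----------
   The face lattice of P_M^dual is the opposite of that of P_M. A nonempty face
   of P_M^dual is represented by the face G of P_M it corresponds to: G ranges
   over the faces of P_M different from P_M itself (P_M corresponds to the
   empty face of P_M^dual), together with G = set0 (the empty face of P_M),
   which represents P_M^dual itself.  Inclusion is reversed, and the face of
   P_M^dual corresponding to G has dimension dim P_M - 1 - dim G. In
   particular the facet F_B of P_M^dual is represented by [set B]. *)

Definition dual_face (indep : pred {set E}) (G : {set {set E}}) : Prop :=
  (G = set0 \/ is_face indep G) /\ G != all_bases indep.

(** H represents a face of P_M^dual contained in the face represented by G *)
Definition dual_sub (indep : pred {set E}) (G H : {set {set E}}) : Prop :=
  dual_face indep H /\ G \subset H.

Definition dual_face_codim (indep : pred {set E}) (l : nat)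
    (G H : {set {set E}}) : Prop :=
  dual_sub indep G H /\ aff_dim H = aff_dim G + l%:Z.

Definition dual_facet (indep : pred {set E}) (G H : {set {set E}}) : Prop :=
  dual_face_codim indep 1 G H.

Definition lists_facets (indep : pred {set E}) (G : {set {set E}})
    (s : seq {set {set E}}) : Prop :=
  uniq s /\ forall H, H \in s <-> dual_facet indep G H.

(** dshell indep k G s: s is a shelling order of the facets of the
    k-dimensional face of P_M^dual represented by G, following the definition:
    - polygon (k = 2): every edge after the first shares a vertex with an
      earlier edge;
    - k >= 3: for every j >= 2 the intersection of F_j with the union of the
      earlier facets is a (nonempty) union of facets of F_j forming an
      initial segment of some shelling order of F_j.
    (For k <= 1 any ordering of the facets counts as a shelling.) *)
Fixpoint dshell (indep : pred {set E}) (k : nat) (G : {set {set E}})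
    (s : seq {set {set E}}) {struct k} : Prop :=
  lists_facets indep G s /\
  match k with
  | 0 => True
  | 1 => True
  | 2 =>
      forall j : nat, (0 < j < size s)%N ->
        exists2 i : nat, (i < j)%N &
          exists H, dual_face_codim indep 2 G H /\
            nth set0 s i \subset H /\ nth set0 s j \subset H
  | k'.+1 =>
      forall j : nat, (0 < j < size s)%N ->
        let Fj := nth set0 s j in
        (* T = facets of F_j contained in some earlier F_i *)
        let T := fun H => dual_facet indep Fj H /\
                    exists2 i : nat, (i < j)%N & nth set0 s i \subset H in
        [/\
            exists H, T H,
            (* F_j \cap F_i is covered by the facets in T, for i < j *)
            (forall (i : nat) H, (i < j)%N -> dual_sub indep Fj H ->
               nth set0 s i \subset H ->
               exists2 H', T H' & H' \subset H) &
            exists t : seq {set {set E}}, exists m : nat,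
              dshell indep k' Fj t /\ forall H, H \in take m t <-> T H]
  end.

End Matroids.

(* Main.v *)
Require Import Defs.
From Stdlib Require Import Rdefinitions.
From HB Require Import structures.
From mathcomp Require Import all_boot all_order all_algebra.
From mathcomp Require Import Rstruct.
From mathcomp Require Import zify ring lra.
Import Order.TTheory GRing.Theory Num.Theory.

Module Helpers.
Set Implicit Arguments. Unset Strict Implicit. Unset Printing Implicit Defensive.

Section Aux.
Variable E : finType.
Local Open Scope ring_scope.

Lemma chiE (X : {set E}) x : chi X 0 (enum_rank x) = (x \in X)%:R.
Proof. by rewrite /chi mxE enum_rankK; case: (x \in X). Qed.

Definition dl (x : E) : 'cV[R]_#|E| := \col_j ((j == enum_rank x)%:R).

Lemma sum_dl (F : 'I_#|E| -> R) x : \sum_j F j * (j == enum_rank x)%:R = F (enum_rank x).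
Proof.
rewrite (bigD1 (enum_rank x)) //= eqxx mulr1 big1 ?addr0 // => j /negbTE ->.
by rewrite mulr0.
Qed.

Lemma dot3 (v : 'rV[R]_#|E|) (a b c : R) x y z :
  (v *m (a *: dl x + b *: dl y + c *: dl z)) 0 0 =
  a * v 0 (enum_rank x) + b * v 0 (enum_rank y) + c * v 0 (enum_rank z).
Proof.
rewrite mxE.
under eq_bigr => j _ do rewrite !mxE !mulrDr ![v 0 j * (_ * _)]mulrCA.
by rewrite !big_split /= -!mulr_sumr !sum_dl.
Qed.

Lemma chiBE (X Z : {set E}) x : (chi X - chi Z) 0 (enum_rank x) = (x \in X)%:R - (x \in Z)%:R.
Proof. by rewrite /chi !mxE !enum_rankK; case: (x \in X); case: (x \in Z). Qed.

Lemma valE (c : 'rV[R]_#|E|) (B : {set E}) :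
  (c *m (chi B)^T) 0 0 = \sum_(x in B) c 0 (enum_rank x).
Proof.
rewrite mxE (reindex (@enum_rank E)) /=; last first.
  by exists (@enum_val _ _) => x _; rewrite ?enum_rankK ?enum_valK.
rewrite [RHS]big_mkcond /=; apply: eq_bigr => x _.
by rewrite !mxE enum_rankK; case: (x \in B); rewrite ?mulr1 ?mulr0.
Qed.

Definition amx (G : {set {set E}}) :=
  \matrix_(i < #|G|) (chi (enum_val i) - chi (odflt set0 [pick B in G])).

Lemma aff_dimE (G : {set {set E}}) : G != set0 -> aff_dim G = (\rank (amx G))%:Z.
Proof. by rewrite /aff_dim => /negbTE ->. Qed.

Lemma diff_sub (G : {set {set E}}) (X Z : {set E}) : X \in G -> Z \in G -> (chi X - chi Z <= amx G)%MS.
Proof.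
move=> HX HZ.
set B0 := odflt set0 [pick B in G].
have rX Y (HY : Y \in G) : chi Y - chi B0 = row (enum_rank_in HY Y) (amx G).
  by rewrite rowK enum_rankK_in.
have -> : chi X - chi Z = (chi X - chi B0) + - (chi Z - chi B0).
  by rewrite opprB addrA subrK.
by rewrite addmx_sub // ?(eqmx_opp _) rX row_sub.
Qed.

Lemma rank_ge (n0 n m : nat) (A : 'M[R]_(n0, n)) (u : 'I_m -> 'rV[R]_n) (p : 'I_m -> 'cV[R]_n) :
  (forall k, (u k <= A)%MS) -> (forall k l, (u k *m p l) 0 0 = (k == l)%:R) -> (m <= \rank A)%N.
Proof.
move=> Hu Hp.
pose D := \matrix_(k < m) u k.
pose P := \matrix_(i < n, l < m) p l i 0.
have DP : D *m P = 1%:M.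
  apply/matrixP => k l; rewrite !mxE -Hp /D /P !mxE; apply: eq_bigr => i _; rewrite !mxE //.
have H1 : (m <= \rank D)%N by rewrite -{1}(mxrank1 R m) -DP mxrankM_maxl.
have HD : (D <= A)%MS by apply/row_subP => k; rewrite rowK Hu.
exact: leq_trans H1 (mxrankS HD).
Qed.

Lemma aff_dim1 (B : {set E}) : aff_dim [set B] = 0.
Proof.
rewrite aff_dimE; last by apply/set0Pn; exists B; rewrite inE.
have -> : amx [set B] = 0.
  apply/matrixP => i j; rewrite /amx !mxE.
  have /set1P -> := enum_valP i.
  case: pickP => [x /set1P -> |H]; first by rewrite subrr.
  by have := H B; rewrite inE eqxx.
by rewrite mxrank0.
Qed.


Lemma rank2 (G : {set {set E}}) (X Y Z : {set E}) e g :
  X \in G -> Y \in G -> Z \in G ->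
  e \in X -> e \in Y -> e \notin Z -> g \in Y -> g \notin Z -> g \notin X ->
  (2 <= \rank (amx G))%N.
Proof.
move=> HX HY HZ eX eY eZ gY gZ gX.
apply: (@rank_ge _ _ _ _ (fun k : 'I_2 => if val k == 0%N then chi X - chi Z else chi Y - chi Z)
   (fun l : 'I_2 => if val l == 0%N then 0 *: dl e + 1 *: dl e + (-1) *: dl g
                    else 0 *: dl e + 0 *: dl e + 1 *: dl g)).
  by move=> k; case: ifP => _; apply: diff_sub.
move=> [[|[|//]] Hk] [[|[|//]] Hl] /=; rewrite dot3 !chiBE;
  rewrite ?(negbTE eZ) ?(negbTE gZ) ?(negbTE gX) ?eX ?eY ?gY /=; ring.
Qed.

Lemma rank3 (G : {set {set E}}) (X1 X2 X3 Z : {set E}) e g x :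
  X1 \in G -> X2 \in G -> X3 \in G -> Z \in G ->
  x \in Z -> x \notin X1 -> x \in X2 -> x \in X3 ->
  e \in X3 -> e \notin Z -> e \in X2 ->
  g \notin X3 -> g \in X2 -> g \notin Z ->
  (3 <= \rank (amx G))%N.
Proof.
move=> H1 H2 H3 HZ xZ xX1 xX2 xX3 eX3 eZ eX2 gX3 gX2 gZ.
pose ae := (chi X1 - chi Z) 0 (enum_rank e).
pose ag := (chi X1 - chi Z) 0 (enum_rank g).
apply: (@rank_ge _ _ _ _ (fun k : 'I_3 => if val k == 0%N then chi X1 - chi Z else
                           if val k == 1%N then chi X3 - chi Z else chi X2 - chi Z)
   (fun l : 'I_3 => if val l == 0%N then (-1) *: dl x + 0 *: dl e + 0 *: dl g
                    else if val l == 1%N then (ae - ag) *: dl x + 1 *: dl e + (-1) *: dl g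
                    else ag *: dl x + 0 *: dl e + 1 *: dl g)).
  by move=> k; case: ifP => _; [|case: ifP => _]; apply: diff_sub.
move=> [[|[|[|//]]] Hk] [[|[|[|//]]] Hl] /=; rewrite dot3 -/ae -/ag ?chiBE;
  rewrite ?(negbTE eZ) ?(negbTE gZ) ?(negbTE gX3) ?(negbTE xX1) ?xZ ?xX2 ?xX3 ?eX3 ?eX2 ?gX2 /=; ring.
Qed.

End Aux.

Section Mat.
Variable E : finType.
Variable indep : pred {set E}.
Hypothesis HM : is_matroid indep.

Lemma basis_indep B : is_basis indep B -> indep B. Proof. by case/andP. Qed.

Lemma basis_max B B' : is_basis indep B -> indep B' -> B \subset B' -> B' = B.
Proof. by case/andP=> _ /forallP H HB' HS; apply/eqP; move: (H B'); rewrite HB' HS. Qed.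

Lemma basis_max_card B A : is_basis indep B -> indep A -> (#|A| <= #|B|)%N.
Proof.
move=> HB HA; rewrite leqNgt; apply/negP => Hlt.
case: HM => _ _ Haug.
have [e He HeB] := Haug B A (basis_indep HB) HA Hlt.
have := basis_max HB HeB (subsetUr _ _).
move/setP/(_ e); rewrite in_setU1 eqxx /=.
by move: He; rewrite in_setD => /andP[/negbTE -> _].
Qed.

Lemma basis_card B B' : is_basis indep B -> is_basis indep B' -> #|B| = #|B'|.
Proof.
move=> HB HB'; apply/eqP.
by rewrite eqn_leq (basis_max_card HB' (basis_indep HB)) (basis_max_card HB (basis_indep HB')).
Qed.

Lemma card_basis B A : is_basis indep B -> indep A -> (#|B| <= #|A|)%N -> is_basis indep A.
Proof.
move=> HB HA Hc; rewrite /is_basis HA /=; apply/forallP => A'; apply/implyP => /andP[HA' HS].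
rewrite eq_sym eqEcard HS /=; exact: leq_trans (basis_max_card HB HA') Hc.
Qed.

Lemma extend n : forall B A, is_basis indep B -> indep A -> (#|B| - #|A| <= n)%N ->
  exists A', [/\ is_basis indep A', A \subset A' & A' \subset A :|: B].
Proof.
elim: n => [|n IH] B A HB HA Hn.
  exists A; split => //; last exact: subsetUl.
  by apply: card_basis HB HA _; rewrite -subn_eq0 -leqn0.
case: (ltnP #|A| #|B|) => Hlt; last first.
  by exists A; split => //; [exact: card_basis HB HA Hlt | exact: subsetUl].
case: HM => _ _ Haug.
have [e He HeA] := Haug A B HA (basis_indep HB) Hlt.
move: He; rewrite in_setD => /andP[eA eB].
have [|A' [H1 H2 H3]] := IH B (e |: A) HB HeA.
  by rewrite cardsU1 eA /=; lia.
exists A'; split => //; first exact: subset_trans (subsetUr [set e] A) H2.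
apply: subset_trans H3 _; apply/subsetP => x; rewrite !inE.
by case/orP => [/orP[/eqP->|->]|->]; rewrite ?eB ?orbT.
Qed.

Lemma exchange Bi Bj e : is_basis indep Bi -> is_basis indep Bj -> e \in Bi -> e \notin Bj ->
  exists2 f, (f \in Bj) && (f \notin Bi) & is_basis indep (e |: (Bj :\ f)).
Proof.
move=> HBi HBj eBi eBj.
case: (HM) => _ Hsub _.
have HA : indep (e |: (Bi :&: Bj)).
  apply: Hsub (basis_indep HBi) _; apply/subsetP => x; rewrite !inE.
  by case/orP => [/eqP->//|/andP[]//].
have [A' [H1 H2 H3]] := extend (n := #|Bj|) HBj HA (leq_subr _ _).
have H3' : A' \subset e |: Bj.
  apply: subset_trans H3 _; apply/subsetP => x; rewrite !inE.
  by case/orP => [/orP[->//|/andP[_ ->]]|->]; rewrite ?orbT.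
have cA' : #|A'| = #|Bj| := basis_card H1 HBj.
have eA' : e \in A' by apply: (subsetP H2); rewrite !inE eqxx.
have : ~~ ((e |: Bj) \subset A').
  apply/negP => Hs; have := subset_leq_card Hs.
  by rewrite cA' cardsU1 eBj /= add1n ltnn.
case/subsetPn => f fin fnA'.
have fBj : f \in Bj.
  move: fin; rewrite in_setU1 => /orP[/eqP Hfe|//].
  by move: fnA'; rewrite Hfe eA'.
have fBi : f \notin Bi.
  apply/negP => fBi; apply: (negP fnA'); apply: (subsetP H2); by rewrite !inE fBi fBj orbT.
exists f; first by rewrite fBj fBi.
suff -> : e |: (Bj :\ f) = A' by [].
apply/esym/eqP; rewrite eqEcard; apply/andP; split.
  apply/subsetP => x xA; have := subsetP H3' x xA; rewrite !inE.
  case/orP => [->//|xBj]; apply/orP; right; rewrite xBj andbT.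
  by apply: contraNneq fnA' => <-.
rewrite cA' cardsU1 [#|Bj|](cardsD1 f) fBj.
by case: (e \notin Bj :\ f); rewrite /= ?add0n ?leqnSn.
Qed.

End Mat.

Section Edge.
Variable E : finType.
Variable indep : pred {set E}.
Hypothesis HM : is_matroid indep.
Local Open Scope ring_scope.

Local Notation vl c B := ((c *m (chi B)^T) 0 0).

Lemma vl_exch (c : 'rV[R]_#|E|) (B : {set E}) e f : e \notin B -> f \in B ->
  vl c (e |: (B :\ f)) = vl c B - c 0 (enum_rank f) + c 0 (enum_rank e).
Proof.
move=> eB fB; rewrite !valE big_setU1 /=; last by rewrite !inE negb_and eB orbT.
rewrite [in RHS](big_setD1 f fB) /=; ring.
Qed.

Lemma face_adj (G : {set {set E}}) B B' :
  (G = set0 \/ is_face indep G) -> (\rank (amx G) <= 1)%N ->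
  B \in G -> B' \in G -> B != B' -> #|B' :\: B| = 1%N.
Proof.
move=> [-> | [c HG]] Hr HB HB' Hne; first by rewrite inE in HB.
have memG X : X \in G = is_basis indep X &&
    [forall B2, is_basis indep B2 ==> (vl c B2 <= vl c X)] by rewrite HG inE.
move: (HB) (HB'); rewrite !memG => /andP[bB /forallP mB] /andP[bB' /forallP mB'].
have mB2 X : is_basis indep X -> vl c X <= vl c B by move=> hX; exact: (implyP (mB X) hX).
have mB2' X : is_basis indep X -> vl c X <= vl c B' by move=> hX; exact: (implyP (mB' X) hX).
case: (set_0Vmem (B' :\: B)) => [H0 | [e1 He1]].
  have : B' \subset B by rewrite -setD_eq0 H0.
  by move/(basis_max bB' (basis_indep bB)) => Heq; rewrite Heq eqxx in Hne.
case: (eqVneq #|B' :\: B| 1%N) => // Hn1; exfalso.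
case: (arg_maxP (fun e => c 0 (enum_rank e)) He1) => es Hes Hmax.
have Hes2 : es \in B' :\: B := Hes. move: (Hes2); rewrite !inE => /andP[esB esB'].
have [f /andP[fB fB'] bX] := exchange HM bB' bB esB' esB.
have [e' /andP[e'B' e'B] bY] := exchange HM bB bB' fB fB'.
have h1 := mB2 _ bX; rewrite vl_exch // in h1.
have h2 := mB2' _ bY; rewrite vl_exch // in h2.
have h3 : c 0 (enum_rank e') <= c 0 (enum_rank es).
  by apply: (Hmax e'); have : e' \in B' :\: B by rewrite in_setD e'B e'B'.
have HX : es |: (B :\ f) \in G.
  rewrite memG bX /=; apply/forallP => B2; apply/implyP => hB2.
  rewrite vl_exch //; have := mB2 _ hB2; lra.
case: (set_0Vmem ((B' :\: B) :\ es)) => [H0 | [g Hg]].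
  by move: Hn1; rewrite (cardsD1 es) Hes2 H0 cards0.
move: Hg; rewrite !inE => /andP[gne /andP[gB gB']].
have := rank2 HX HB' HB (setU11 _ _) esB' esB gB' gB _.
rewrite !inE (negbTE gB) (negbTE gne) andbF /= => /(_ isT) H2.
by have := leq_trans H2 Hr.
Qed.

End Edge.

Section Key.
Variable E : finType.
Variable indep : pred {set E}.
Hypothesis HM : is_matroid indep.
Local Open Scope ring_scope.
Local Notation vl c B := ((c *m (chi B)^T) 0 0).

Lemma vl_chi (I B : {set E}) : vl (chi I) B = (#|B :&: I|)%:R.
Proof.
rewrite valE.
transitivity (\sum_(x in B) ((x \in I) : nat)%:R : R).
  by apply: eq_bigr => x _; rewrite chiE.
rewrite -natr_sum; congr (_%:R).
rewrite -sum1_card [LHS]big_mkcond [RHS]big_mkcond /=; apply: eq_bigr => x _.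
by rewrite inE; case: (x \in B); case: (x \in I).
Qed.

Lemma face_basis (H : {set {set E}}) X : (H = set0 \/ is_face indep H) -> X \in H -> is_basis indep X.
Proof.
case=> [-> | [c ->]]; first by rewrite inE.
by rewrite inE => /andP[].
Qed.


Lemma key (s : seq {set E}) i j : uniq s -> (forall B, B \in s = is_basis indep B) ->
  dshell indep `|aff_dim (all_bases indep)|%N set0 [seq [set B] | B <- s] ->
  (i < j)%N -> (j < size s)%N ->
  exists2 i', (i' < j)%N &
     (nth set0 s i :&: nth set0 s j \subset nth set0 s i') /\
     #|nth set0 s j :\: nth set0 s i'| = 1%N.
Proof.
move=> Hu Hs Hd lij ljs.
have lis : (i < size s)%N by lia.
have bas k : (k < size s)%N -> is_basis indep (nth set0 s k) by move=> Hk; rewrite -Hs mem_nth.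
have nthm k : (k < size s)%N -> nth set0 [seq [set B] | B <- s] k = [set nth set0 s k].
  by move=> Hk; rewrite (nth_map set0).
set Bi := nth set0 s i; set Bj := nth set0 s j.
have bi : is_basis indep Bi := bas i lis.
have bj : is_basis indep Bj := bas j ljs.
have neq k : (k < j)%N -> nth set0 s k != Bj.
  by move=> Hk; rewrite nth_uniq ?(ltn_trans Hk ljs) //; lia.
set allB := all_bases indep.
have inA X : is_basis indep X -> X \in allB by rewrite inE.
have nA : allB != set0 by apply/set0Pn; exists Bj; apply: inA.
case: (eqVneq #|Bj :\: Bi| 1%N) => [adj | nadj].
  by exists i => //; split => //; exact: subsetIl.
have cBB : #|Bi :\: Bj| = #|Bj :\: Bi|.
  move: (cardsID Bj Bi) (cardsID Bi Bj); rewrite (basis_card HM bi bj) setIC; lia.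
have c0 : #|Bj :\: Bi| != 0%N.
  rewrite cards_eq0 setD_eq0; apply/negP => Hsub.
  by have := basis_max bj (basis_indep bi) Hsub; move=> Heq; move: (neq i lij); rewrite -/Bi Heq eqxx.
have [e He] : exists e, e \in Bi :\: Bj.
  apply/set0Pn; by rewrite -cards_eq0 cBB.
have [g Hg] : exists g, g \in (Bi :\: Bj) :\ e.
  apply/set0Pn; rewrite -cards_eq0; move: c0 nadj; rewrite -cBB (cardsD1 e) He; lia.
move: He Hg; rewrite !inE => /andP[eBj eBi] /andP[gne /andP[gBj gBi]].
have [f /andP[fBj fBi] bX] := exchange HM bi bj eBi eBj.
set X := e |: (Bj :\ f).
have gX : g \notin X by rewrite !inE (negbTE gne) (negbTE gBj) andbF.
have eX : e \in X by rewrite !inE eqxx.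
have r2 : (2 <= \rank (amx allB))%N.
  exact: rank2 (inA _ bX) (inA _ bi) (inA _ bj) eX eBi eBj gBi gBj gX.
move: Hd; rewrite (aff_dimE nA) /=.
case Hk: (\rank (amx allB)) => [|[|[|k']]].
- by rewrite Hk in r2.
- by rewrite Hk in r2.
- move=> [_ Hd2].
  have [|i' li' [H [[[[Hf _] _] Had] [Hi' Hj']]]] := Hd2 j.
    by rewrite size_map (leq_ltn_trans (leq0n i) lij) ljs.
  have li's : (i' < size s)%N := ltn_trans li' ljs.
  rewrite nthm // sub1set in Hi'; rewrite nthm // sub1set in Hj'.
  have nH : H != set0 by apply/set0Pn; exists Bj.
  rewrite aff_dimE // /aff_dim eqxx in Had.
  have rH : \rank (amx H) = 1%N.
    have : (\rank (amx H))%:Z = 1%:Z by rewrite Had.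
    by case.
  have adj' := face_adj HM Hf (eq_leq rH) Hi' Hj' (neq i' li').
  exists i' => //; split => //.
  apply/subsetP => x; rewrite inE => /andP[xBi xBj]; apply/negPn/negP => xn.
  have xX : x \in X.
    rewrite !inE xBj andbT; apply/orP; right; apply: contraNneq fBi => <-; exact: xBi.
  have := rank3 (inA _ (bas i' li's)) (inA _ bi) (inA _ bX) (inA _ bj)
            xBj xn xBi xX eX eBj eBi gX gBi gBj.
  by rewrite Hk.
- move=> [_ Hd3].
  have [|[H' TH'] Hcov _] := Hd3 j.
    by rewrite size_map (leq_ltn_trans (leq0n i) lij) ljs.
  rewrite nthm // in TH' Hcov.
  set I := Bi :&: Bj.
  set H := [set B | is_basis indep B && [forall B', is_basis indep B' ==>
                     (vl (chi I) B' <= vl (chi I) B)]].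
  have memH1 Y : is_basis indep Y -> I \subset Y -> Y \in H.
    move=> bY IY; rewrite inE bY /=; apply/forallP => B2; apply/implyP => _.
    rewrite !vl_chi.
    have -> : Y :&: I = I by apply/setIidPr.
    by rewrite ler_nat subset_leq_card // subsetIr.
  have memH2 Y : Y \in H -> I \subset Y.
    rewrite inE => /andP[_ /forallP mY].
    have := implyP (mY Bi) bi; rewrite !vl_chi.
    have -> : Bi :&: I = I by apply/setIidPr; exact: subsetIl.
    rewrite ler_nat => Hc.
    have : Y :&: I == I by rewrite eqEcard subsetIr Hc.
    by move/eqP => <-; exact: subsetIl.
  have getT : exists H', [/\ dual_facet indep [set Bj] H',
       exists2 i', (i' < j)%N & nth set0 s i' \in H' & H' \subset H].
    case: (eqVneq H allB) => [HA | HnA].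
      case: TH' => Hfac [i' li' Hi'].
      exists H'; split => //.
        by exists i' => //; move: Hi'; rewrite nthm ?(ltn_trans li' ljs) // sub1set.
      apply/subsetP => Y YH'; rewrite HA inE.
      exact: (face_basis Hfac.1.1.1 YH').
    have [||H'' [Hfac [i' li' Hi']] sub] := Hcov i H lij.
    - split; last by rewrite sub1set; apply: memH1 bj _; exact: subsetIr.
      split => //; right; by exists (chi I).
    - by rewrite nthm // sub1set; apply: memH1 bi _; exact: subsetIl.
    exists H''; split => //.
    by exists i' => //; move: Hi'; rewrite nthm ?(ltn_trans li' ljs) // sub1set.
  have [H0 [[[[Hf _] HjH'] Had] [i' li' Hi'] HH]] := getT.
  rewrite sub1set in HjH'.
  have nH : H0 != set0 by apply/set0Pn; exists Bj.
  rewrite aff_dim1 aff_dimE // in Had.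
  have rH : \rank (amx H0) = 1%N.
    have : (\rank (amx H0))%:Z = 1%:Z by rewrite Had.
    by case.
  have adj' := face_adj HM Hf (eq_leq rH) Hi' HjH' (neq i' li').
  exists i' => //; split => //.
  by apply: memH2; exact: (subsetP HH _ Hi').
Qed.

End Key.
End Helpers.
Import Helpers.


Theorem theorem1p1 (E : finType) (indep : pred {set E}) (s : seq {set E}) :
  is_matroid indep ->
  uniq s ->
  (forall B, B \in s = is_basis indep B) ->
  dshell indep `|aff_dim (all_bases indep)|%N set0 [seq [set B] | B <- s] ->
  sc_shelling s.
Proof.
move=> HM Hu Hs Hd j /andP[j0 ljs] /=.
have bas k : (k < size s)%N -> is_basis indep (nth set0 s k) by move=> Hk; rewrite -Hs mem_nth.
set Bj := nth set0 s j.
have bj : is_basis indep Bj := bas j ljs.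
have Hsz : sc_size s = #|Bj|.
  rewrite /sc_size; apply/eqP; rewrite eqn_leq; apply/andP; split.
    apply/bigmax_leqP_seq => B HB _.
    by rewrite (basis_card HM (B' := Bj)) // -Hs.
  by apply: (leq_bigmax_seq (F := fun B : {set E} => #|B|)) => //; exact: mem_nth.
rewrite Hsz; split.
- move=> F [FBj [i lij FBi]]; right.
  have [i' li' [HI Hc]] := key HM Hu Hs Hd lij ljs.
  exists (nth set0 s i' :&: Bj).
    split; [exact: subsetIr | by exists i' => //; exact: subsetIl].
  split.
    apply/subsetP => x xF; have xi := subsetP FBi x xF; have xj := subsetP FBj x xF.
    by rewrite inE xj andbT; apply: (subsetP HI); rewrite inE xi xj.
  move: (cardsID (nth set0 s i') Bj); rewrite setIC Hc; lia.
- move=> F [FBj [i lij FBi]].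
  have lis : (i < size s)%N := ltn_trans lij ljs.
  have bi := bas i lis.
  have pr : (nth set0 s i :&: Bj) \proper Bj.
    rewrite properEneq subsetIr andbT; apply/negP => /eqP Heq.
    have Hsub : Bj \subset nth set0 s i by rewrite -Heq subsetIl.
    have := basis_max bj (basis_indep bi) Hsub.
    by move/eqP; rewrite nth_uniq // ?(ltn_trans lij ljs) // => /eqP Hij; rewrite Hij ltnn in lij.
  have := proper_card pr.
  have FI : F \subset nth set0 s i :&: Bj by rewrite subsetI FBi FBj.
  have := subset_leq_card FI.
  lia.
Qed.
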